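(* Let $\mathcal{N}$ denote the class of all networks $(X,A_X)$, where $X$ is a finite nonempty set and $A_X:X\times X\to\mathbb{R}$ satisfies $A_X(x,x')\ge 0$ for all $x,x'\in X$, with $A_X(x,x')=0$ if and only if $x=x'$ ($A_X$ need not be symmetric nor satisfy the triangle inequality). For a network $(X,A_X)$ define $\bar A_X(x,x')=\max\big(A_X(x,x'),A_X(x',x)\big)$ and $$u^R_X(x,x')=\min_{C(x,x')}\ \max_{0\le i\le l-1}\bar A_X(x_i,x_{i+1}),$$ where the minimum is over all chains $C(x,x')=[x=x_0,x_1,\dots,x_l=x']$ of nodes of $X$ from $x$ to $x'$. Let $\mathcal{H}^R$ be the method assigning to each network $(X,A_X)$ the function $u^R_X$ on $X\times X$. Then: (i) for every network $(X,A_X)\in\mathcal{N}$, $u^R_X$ is an ultrametric on $X$; and (ii) $\mathcal{H}^R$ satisfies the Axiom of Value (A1) and the Axiom of Transformation (A2).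
   Context: An ultrametric on a finite set $X$ is a function $u_X:X\times X\to\mathbb{R}$ that is nonnegative, symmetric ($u_X(x,x')=u_X(x',x)$), satisfies $u_X(x,x')=0$ iff $x=x'$, and satisfies the strong triangle inequality $u_X(x,x')\le\max\big(u_X(x,x''),u_X(x'',x')\big)$ for all $x,x',x''\in X$. A (hierarchical) clustering method $\mathcal{H}$ is a map assigning to every network $(X,A_X)$ an ultrametric $u_X$ on $X$ (equivalently a dendrogram on $X$; $u_X(x,x')$ is the smallest resolution at which $x,x'$ are clustered together). Axiom of Value (A1): for every two-node network $X=\{p,q\}$ with $A_X(p,q)=\alpha$, $A_X(q,p)=\beta$ (with $\alpha,\beta>0$), the output ultrametric satisfies $u_X(p,q)=\max(\alpha,\beta)$. Axiom of Transformation (A2): for any two networks $(X,A_X)$, $(Y,A_Y)$ and any map $\phi:X\to Y$ with $A_X(x,x')\ge A_Y(\phi(x),\phi(x'))$ for all $x,x'\in X$, the output ultrametrics $u_X=\mathcal{H}(X,A_X)$ and $u_Y=\mathcal{H}(Y,A_Y)$ satisfy $u_X(x,x')\ge u_Y(\phi(x),\phi(x'))$ for all $x,x'\in X$. *)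

(* Defs.v *)
From HB Require Import structures.
From mathcomp Require Import all_boot all_order all_algebra.
From mathcomp Require Import boolp classical_sets reals.
Set Implicit Arguments. Unset Strict Implicit. Unset Printing Implicit Defensive.
Import Order.TTheory GRing.Theory Num.Theory.
Local Open Scope classical_set_scope.
Local Open Scope ring_scope.

Definition is_network (R : realType) (X : finType) (A : X -> X -> R) : Prop :=
  (forall x x', 0 <= A x x') /\ (forall x x', A x x' = 0 <-> x = x').

Definition is_ultrametric (R : realType) (X : finType) (u : X -> X -> R) : Prop :=
  [/\ (forall x x', 0 <= u x x'),
      (forall x x', u x x' = u x' x),
      (forall x x', u x x' = 0 <-> x = x') &
      (forall x x' x'', u x x' <= Num.max (u x x'') (u x'' x'))].

Definition Abar (R : realType) (X : finType) (A : X -> X -> R) (x x' : X) : R :=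
  Num.max (A x x') (A x' x).

(* The chain [x = x_0, x_1, ..., x_l] is represented by its head x and the
   list s = [x_1; ...; x_l]; it ends at last x s. *)
Definition chain_cost (R : realType) (X : finType) (A : X -> X -> R)
    (x : X) (s : seq X) : R :=
  \big[Num.max/0]_(p <- zip (x :: s) s) Abar A p.1 p.2.

Definition is_chain (X : finType) (x x' : X) (s : seq X) : Prop := last x s = x'.

Definition uR (R : realType) (X : finType) (A : X -> X -> R) (x x' : X) : R :=
  xget 0 [set m : R | (exists s, is_chain x x' s /\ chain_cost A x s = m) /\
                      (forall s, is_chain x x' s -> m <= chain_cost A x s)].

(* Main.v *)
Require Import Defs.
From HB Require Import structures.
From mathcomp Require Import all_boot all_order all_algebra.
From mathcomp Require Import boolp classical_sets reals.
Import Order.TTheory GRing.Theory Num.Theory.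
Local Open Scope ring_scope.

Set Implicit Arguments.
Section Helpers.
Variable R : realType.

Lemma seq_min (L : seq R) (P : R -> Prop) m0 : m0 \in L -> P m0 ->
  exists m, P m /\ forall m', m' \in L -> P m' -> m <= m'.
Proof.
elim: L m0 => [//|a L IH] m0 Hm0 Pm0.
have [[m' [Hm' Pm']]|N] := pselect (exists m', m' \in L /\ P m').
  have [m [Pm Hm]] := IH m' Hm' Pm'.
  have [Pa|nPa] := pselect (P a).
    have [am|ma] := leP a m.
      exists a; split => // z; rewrite inE => /orP[/eqP->//|zL] Pz.
      exact: le_trans am (Hm z zL Pz).
    exists m; split => // z; rewrite inE => /orP[/eqP->|zL] Pz; first exact: ltW.
    exact: Hm.
  exists m; split => // z; rewrite inE => /orP[/eqP->|zL] Pz //; exact: Hm.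
exists a; split.
  move: Hm0; rewrite inE => /orP[/eqP<-//|H]; exfalso; apply: N; by exists m0.
move=> z; rewrite inE => /orP[/eqP->//|zL] Pz; exfalso; apply: N; by exists z.
Qed.

Variable X : finType.
Variable A : X -> X -> R.

Lemma cost_nil x : chain_cost A x [::] = 0.
Proof. by rewrite /chain_cost /= big_nil. Qed.

Lemma cost_cons x y s :
  chain_cost A x (y :: s) = Num.max (Abar A x y) (chain_cost A y s).
Proof. by rewrite /chain_cost /= big_cons. Qed.

Lemma cost_le t x s : 0 <= t ->
  (chain_cost A x s <= t) = path (fun a b => Abar A a b <= t) x s.
Proof.
move=> t0; elim: s x => [|y s IH] x /=; first by rewrite cost_nil t0.
by rewrite cost_cons ge_max IH.
Qed.

Definition Fvals : seq R := 0 :: [seq Abar A p.1 p.2 | p <- enum {: X * X}].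

Lemma cost_in x s : chain_cost A x s \in Fvals.
Proof.
elim: s x => [|y s IH] x; first by rewrite cost_nil mem_head.
rewrite cost_cons; case: (leP (Abar A x y) (chain_cost A y s)) => h.
  by [].
rewrite inE; apply/orP; right.
apply/mapP; exists (x, y) => //; by rewrite mem_enum.
Qed.

Lemma uR_spec x x' :
  (exists s, is_chain x x' s /\ chain_cost A x s = uR A x x') /\
  (forall s, is_chain x x' s -> uR A x x' <= chain_cost A x s).
Proof.
rewrite /uR; set S := (X in xget 0 X).
suff: S (xget 0 S) by case=> [[s [H1 H2]] H3]; split => //; exists s.
apply: xgetPex.
have [m [[s [Hs Hc]] Hm]] := @seq_min Fvals (fun m => exists s, is_chain x x' s /\ chain_cost A x s = m)
   _ (cost_in x [:: x']) (ex_intro _ [:: x'] (conj erefl erefl)).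
exists m; split; first by exists s.
move=> s' Hs'; apply: Hm; [exact: cost_in | by exists s'].
Qed.

Hypothesis Anet : is_network A.

Lemma Abar_ge0 a b : 0 <= Abar A a b.
Proof. by rewrite /Abar le_max Anet.1. Qed.

Lemma Abar_sym a b : Abar A a b = Abar A b a.
Proof. by rewrite /Abar maxC. Qed.

Lemma cost_ge0 x s : 0 <= chain_cost A x s.
Proof.
elim: s x => [|y s IH] x; first by rewrite cost_nil.
by rewrite cost_cons le_max Abar_ge0.
Qed.

Lemma uR_ge0 x x' : 0 <= uR A x x'.
Proof. have [[s [_ <-]] _] := uR_spec x x'; exact: cost_ge0. Qed.

Lemma uR_path x x' : exists s, last x s = x' /\
  path (fun a b => Abar A a b <= uR A x x') x s.
Proof.
have [[s [Hs Hc]] _] := uR_spec x x'.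
by exists s; split => //; rewrite -cost_le ?Hc ?uR_ge0.
Qed.

Lemma uR_le_path t x x' s : 0 <= t -> last x s = x' ->
  path (fun a b => Abar A a b <= t) x s -> uR A x x' <= t.
Proof.
move=> t0 Hl Hp; have [_ H] := uR_spec x x'.
apply: le_trans (H s Hl) _; by rewrite cost_le.
Qed.

Lemma path_const (e : rel X) x s : (forall a b, e a b -> a = b) ->
  path e x s -> last x s = x.
Proof.
move=> He; elim: s x => [//|y s IH] x /= /andP[/He <- Hp]; exact: IH.
Qed.

Lemma last_revb (x : X) s : last (last x s) (rev (belast x s)) = x.
Proof. by case: s => //= y s; rewrite rev_cons last_rcons. Qed.

End Helpers.
Arguments uR_le_path {R X A t x x'} s.

Theorem proposition1 (R : realType) :
  (* (i) u^R_X is an ultrametric for every network *)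
  (forall (X : finType) (A : X -> X -> R),
      (0 < #|X|)%N -> is_network A -> is_ultrametric (uR A)) /\
  (* (ii) Axiom of Value (A1) *)
  (forall (X : finType) (A : X -> X -> R) (p q : X) (alpha beta : R),
      p != q -> (forall x : X, x = p \/ x = q) -> is_network A ->
      A p q = alpha -> A q p = beta -> 0 < alpha -> 0 < beta ->
      uR A p q = Num.max alpha beta) /\
  (* (ii) Axiom of Transformation (A2) *)
  (forall (X Y : finType) (AX : X -> X -> R) (AY : Y -> Y -> R) (phi : X -> Y),
      (0 < #|X|)%N -> is_network AX -> (0 < #|Y|)%N -> is_network AY ->
      (forall x x', AY (phi x) (phi x') <= AX x x') ->
      forall x x', uR AY (phi x) (phi x') <= uR AX x x').
Proof.
split; [|split].
- move=> X A _ An.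
  have symle : forall x x', uR A x x' <= uR A x' x.
    move=> x x'; have [s [Hl Hp]] := uR_path An x' x.
    apply: (uR_le_path (rev (belast x' s))) => //; first exact: uR_ge0.
      by rewrite -Hl last_revb.
    rewrite -Hl rev_path; apply: sub_path Hp => a b h; by rewrite /= Abar_sym Hl.
  split.
  + exact: uR_ge0.
  + by move=> x x'; apply/eqP; rewrite eq_le !symle.
  + move=> x x'; split.
      move=> H; have [s [Hl Hp]] := uR_path An x x'.
      rewrite -Hl (@path_const _ _ _ _ _ Hp) // => a b; rewrite H => Hab.
      apply/(An.2 a b)/le_anti; rewrite (An.1 a b) andbT.
      by apply: le_trans Hab; rewrite /Abar le_max lexx.
    move=> <-; apply/eqP; rewrite eq_le (uR_ge0 An) andbT.
    by apply: (uR_le_path [::]).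
  + move=> x x' x''.
    have [s1 [Hl1 Hp1]] := uR_path An x x''.
    have [s2 [Hl2 Hp2]] := uR_path An x'' x'.
    apply: (uR_le_path (s1 ++ s2)).
    * by rewrite le_max (uR_ge0 An).
    * by rewrite last_cat Hl1.
    rewrite cat_path Hl1; apply/andP; split.
      by apply: sub_path Hp1 => a b /= h; rewrite le_max h.
    by apply: sub_path Hp2 => a b /= h; rewrite le_max h orbT.
- move=> X A p q al be npq Hpq An Hal Hbe al0 be0.
  have Hab : Abar A p q = Num.max al be by rewrite /Abar Hal Hbe.
  apply/eqP; rewrite eq_le; apply/andP; split.
    apply: (uR_le_path [:: q]) => //; first by rewrite le_max ltW.
    by rewrite /= Hab lexx.
  rewrite leNgt; apply/negP => Hlt.
  have [s [Hl Hp]] := uR_path An p q.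
  move: npq; rewrite -Hl (@path_const _ _ _ _ _ Hp) ?eqxx // => a b Hle.
  move: Hle; case: (Hpq a) => ->; case: (Hpq b) => -> //.
    by rewrite Hab leNgt Hlt.
  by rewrite Abar_sym Hab leNgt Hlt.
- move=> X Y AX AY phi _ AXn _ AYn Hle x x'.
  have [s [Hl Hp]] := uR_path AXn x x'.
  apply: (uR_le_path (map phi s)); first exact: uR_ge0.
    by rewrite last_map Hl.
  rewrite path_map; apply: sub_path Hp => a b /= h.
  apply: le_trans h; rewrite /Abar ge_max !le_max !Hle /= orbT.
  done.
Qed.
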